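(* Let $\mathfrak{R}$ be an alternative ring with a nontrivial idempotent $e_1$ and Peirce decomposition $\mathfrak{R}=\mathfrak{R}_{11}\oplus\mathfrak{R}_{12}\oplus\mathfrak{R}_{21}\oplus\mathfrak{R}_{22}$, satisfying: (i) if $a_{11}\in\mathfrak{R}_{11}$, $a_{22}\in\mathfrak{R}_{22}$ and $[a_{11}+a_{22},\mathfrak{R}_{12}]=0$, then $a_{11}+a_{22}\in\mathcal{Z}(\mathfrak{R})$; (ii) if $a_{11}\in\mathfrak{R}_{11}$, $a_{22}\in\mathfrak{R}_{22}$ and $[a_{11}+a_{22},\mathfrak{R}_{21}]=0$, then $a_{11}+a_{22}\in\mathcal{Z}(\mathfrak{R})$. Let $\mathcal{D}$ be a multiplicative Lie-type derivation of $\mathfrak{R}$. Then for any $i\neq j$ and any $a_{ij},b_{ij}\in\mathfrak{R}_{ij}$, $\mathcal{D}(a_{ij}+b_{ij})=\mathcal{D}(a_{ij})+\mathcal{D}(b_{ij})$.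
   Context: Rings are not assumed associative or unital. The associator is $(x,y,z)=(xy)z-x(yz)$; $\mathfrak{R}$ is alternative if $(x,x,y)=0=(y,x,x)$ for all $x,y$. $[x,y]=xy-yx$ and $\mathcal{Z}(\mathfrak{R})=\{r: [r,x]=0\ \forall x\in\mathfrak{R}\}$. Define $p_1(x)=x$, $p_n(x_1,\dots,x_n)=[p_{n-1}(x_1,\dots,x_{n-1}),x_n]$. For $n\ge2$, a (not necessarily additive) map $\mathcal{D}\colon\mathfrak{R}\to\mathfrak{R}$ is a multiplicative Lie $n$-derivation if $\mathcal{D}(p_n(x_1,\dots,x_n))=\sum_{i=1}^n p_n(x_1,\dots,\mathcal{D}(x_i),\dots,x_n)$ for all $x_i\in\mathfrak{R}$; a multiplicative Lie-type derivation is a multiplicative Lie $n$-derivation for some $n\ge2$. A nontrivial idempotent is $e_1\ne0$ with $e_1^2=e_1$ which is not a multiplicative identity. With $e_2a:=a-e_1a$, $ae_2:=a-ae_1$, set $\mathfrak{R}_{ij}=e_i\mathfrak{R}e_j$ ($i,j=1,2$), so $\mathfrak{R}=\bigoplus_{i,j}\mathfrak{R}_{ij}$. *)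

(* Defs.v *)
(* Non-associative, non-unital rings are modelled as a
   zmodType R together with a biadditive multiplication `mul`. *)
From HB Require Import structures.
From mathcomp Require Import all_boot all_order all_algebra.
Set Implicit Arguments. Unset Strict Implicit. Unset Printing Implicit Defensive.
Import GRing.Theory.
Local Open Scope ring_scope.

Definition nonassoc_ring (R : zmodType) (mul : R -> R -> R) : Prop :=
  left_distributive mul +%R /\ right_distributive mul +%R.

Section NA.
Variables (R : zmodType) (mul : R -> R -> R).

Definition assoc (x y z : R) : R := mul (mul x y) z - mul x (mul y z).

Definition alternative : Prop :=
  forall x y : R, assoc x x y = 0 /\ assoc y x x = 0.

Definition lie (x y : R) : R := mul x y - mul y x.

Definition center (r : R) : Prop := forall x : R, lie r x = 0.

Definition nontrivial_idempotent (e : R) : Prop :=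
  e <> 0 /\ mul e e = e /\ ~ (forall x : R, mul e x = x /\ mul x e = x).

Inductive pidx := P1 | P2.

(* e_i a, with e_2 a := a - e_1 a *)
Definition lmul_e (e : R) (i : pidx) (a : R) : R :=
  match i with P1 => mul e a | P2 => a - mul e a end.
(* a e_j, with a e_2 := a - a e_1 *)
Definition rmul_e (e : R) (j : pidx) (a : R) : R :=
  match j with P1 => mul a e | P2 => a - mul a e end.

Definition peirce (e : R) (i j : pidx) (a : R) : Prop :=
  exists x : R, a = rmul_e e j (lmul_e e i x).

(* p_1(x_1) = x_1, p_{k+1}(x_1..x_{k+1}) = [p_k(x_1..x_k), x_{k+1}];
   here the arguments are indexed from 0: pcomm k x = p_{k+1}(x 0, ..., x k). *)
Fixpoint pcomm (k : nat) (x : nat -> R) : R :=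
  match k with
  | 0 => x 0%N
  | k'.+1 => lie (pcomm k' x) (x k)
  end.

Definition pn (n : nat) (x : nat -> R) : R := pcomm n.-1 x.

Definition upd (x : nat -> R) (i : nat) (y : R) : nat -> R :=
  fun k => if k == i then y else x k.

Definition lie_n_derivation (n : nat) (D : R -> R) : Prop :=
  forall x : nat -> R,
    D (pn n x) = \sum_(i < n) pn n (upd x i (D (x i))).

Definition lie_type_derivation (D : R -> R) : Prop :=
  exists n : nat, (2 <= n)%N /\ lie_n_derivation n D.

End NA.

(* Main.v *)
Require Import Defs.
From mathcomp Require Import all_boot all_order all_algebra.
Import GRing.Theory.
Local Open Scope ring_scope.

Section Alg.
Variables (R : zmodType) (mul : R -> R -> R) (e : R).
Hypothesis Hring : nonassoc_ring mul.
Hypothesis Halt : alternative mul.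
Hypothesis He : mul e e = e.

Local Notation "x ⊙ y" := (mul x y) (at level 40, left associativity).
Local Notation A := (assoc mul).

Lemma mulDl x y z : (x + y) ⊙ z = x ⊙ z + y ⊙ z.
Proof. by case: Hring => H _; apply: H. Qed.
Lemma mulDr x y z : x ⊙ (y + z) = x ⊙ y + x ⊙ z.
Proof. by case: Hring => _ H; apply: H. Qed.
Lemma mul0l x : 0 ⊙ x = 0.
Proof. by apply: (@addrI _ (0 ⊙ x)); rewrite -mulDl !addr0. Qed.
Lemma mul0r x : x ⊙ 0 = 0.
Proof. by apply: (@addrI _ (x ⊙ 0)); rewrite -mulDr !addr0. Qed.
Lemma mulNl x y : (- x) ⊙ y = - (x ⊙ y).
Proof. by apply/eqP; rewrite -addr_eq0 -mulDl addNr mul0l. Qed.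
Lemma mulNr x y : x ⊙ (- y) = - (x ⊙ y).
Proof. by apply/eqP; rewrite -addr_eq0 -mulDr addNr mul0r. Qed.
Lemma mulBl x y z : (x - y) ⊙ z = x ⊙ z - y ⊙ z.
Proof. by rewrite mulDl mulNl. Qed.
Lemma mulBr x y z : x ⊙ (y - z) = x ⊙ y - x ⊙ z.
Proof. by rewrite mulDr mulNr. Qed.

Lemma AE x y z : A x y z = (x ⊙ y) ⊙ z - x ⊙ (y ⊙ z).
Proof. by []. Qed.
Lemma A_Dl x y u v : A (x + y) u v = A x u v + A y u v.
Proof. by rewrite !AE !mulDl opprD addrACA. Qed.
Lemma A_Dm x y u v : A u (x + y) v = A u x v + A u y v.
Proof. by rewrite !AE mulDr !mulDl mulDr opprD addrACA. Qed.
Lemma A_Dr x y u v : A u v (x + y) = A u v x + A u v y.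
Proof. by rewrite !AE !mulDr opprD addrACA. Qed.

Lemma Askew1 x y z : A x y z = - A y x z.
Proof.
have := (proj1 (Halt (x + y) z)).
rewrite A_Dl !A_Dm (proj1 (Halt x z)) (proj1 (Halt y z)) add0r addr0.
by move/eqP; rewrite addr_eq0 => /eqP.
Qed.
Lemma Askew2 x y z : A x y z = - A x z y.
Proof.
have := (proj2 (Halt (y + z) x)).
rewrite A_Dr !A_Dm (proj2 (Halt y x)) (proj2 (Halt z x)) add0r addr0.
by move/eqP; rewrite addrC addr_eq0 => /eqP.
Qed.
Lemma Acyc x y z : A x y z = A y z x.
Proof. by rewrite Askew1 Askew2 opprK. Qed.

Lemma mulA_A x y z : (x ⊙ y) ⊙ z = x ⊙ (y ⊙ z) + A x y z.
Proof. by rewrite AE addrC subrK. Qed.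
Lemma mulA_A' x y z : x ⊙ (y ⊙ z) = (x ⊙ y) ⊙ z - A x y z.
Proof. by rewrite AE opprB addrC subrK. Qed.

Lemma LA x : e ⊙ (e ⊙ x) = e ⊙ x.
Proof. by rewrite mulA_A' (proj1 (Halt e x)) subr0 He. Qed.
Lemma RA x : (x ⊙ e) ⊙ e = x ⊙ e.
Proof. by rewrite mulA_A (proj2 (Halt e x)) addr0 He. Qed.
Lemma FL x : (e ⊙ x) ⊙ e = e ⊙ (x ⊙ e).
Proof. by rewrite mulA_A Askew2 (proj1 (Halt e x)) oppr0 addr0. Qed.

Definition is11 x := e ⊙ x = x /\ x ⊙ e = x.
Definition is12 x := e ⊙ x = x /\ x ⊙ e = 0.
Definition is21 x := e ⊙ x = 0 /\ x ⊙ e = x.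
Definition is22 x := e ⊙ x = 0 /\ x ⊙ e = 0.

Lemma Pa1 V c : is11 V -> is12 c -> is12 (V ⊙ c).
Proof.
move=> [V1 V2] [c1 c2].
have h1 : A e V c = 0 by rewrite Askew1 AE V2 c1 subrr oppr0.
split; first by rewrite mulA_A' V1 h1 subr0.
by rewrite mulA_A c2 mul0r add0r Askew2 -Askew1 h1.
Qed.
Lemma Pa2 V c : is11 V -> is12 c -> c ⊙ V = 0.
Proof.
move=> [V1 V2] [c1 c2].
have h1 : A c V e = 0 by rewrite Acyc AE V2 c1 subrr.
by move: h1; rewrite Askew2 AE c2 mul0l V1 sub0r !opprK.
Qed.
Lemma Pb1 W c : is22 W -> is12 c -> W ⊙ c = 0.
Proof.
move=> [W1 W2] [c1 c2].
have h1 : A e W c = 0 by rewrite -Acyc AE c2 W1 mul0l mul0r subrr.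
by move: h1; rewrite Askew1 AE W2 c1 mul0l sub0r !opprK.
Qed.
Lemma Pb2 W c : is22 W -> is12 c -> is12 (c ⊙ W).
Proof.
move=> [W1 W2] [c1 c2].
have h1 : A e c W = 0 by rewrite Askew2 -Acyc AE c2 W1 mul0l mul0r subrr oppr0.
split; first by rewrite mulA_A' c1 h1 subr0.
by rewrite mulA_A W2 mul0r add0r -Acyc h1.
Qed.
Lemma Pc1 V c : is11 V -> is21 c -> V ⊙ c = 0.
Proof.
move=> [V1 V2] [c1 c2].
have h1 : A V c e = 0 by rewrite Acyc AE c2 V1 subrr.
by move: h1; rewrite Askew2 AE V2 c1 mul0r subr0 => /eqP; rewrite oppr_eq0 => /eqP.
Qed.
Lemma Pc2 V c : is11 V -> is21 c -> is21 (c ⊙ V).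
Proof.
move=> [V1 V2] [c1 c2].
have h1 : A e c V = 0 by rewrite -Acyc AE V2 c1 mul0r subr0 (@Pc1 V c (conj V1 V2) (conj c1 c2)).
split; first by rewrite mulA_A' c1 mul0l h1 subr0.
by rewrite mulA_A V2 -Acyc h1 addr0.
Qed.
Lemma Pd1 W c : is22 W -> is21 c -> is21 (W ⊙ c).
Proof.
move=> [W1 W2] [c1 c2].
have h0 : A W e c = 0 by rewrite AE W2 c1 mul0l mul0r subrr.
have h1 : A e W c = 0 by rewrite Askew1 h0 oppr0.
split; first by rewrite mulA_A' W1 mul0l h1 subrr.
by rewrite mulA_A c2 -Acyc h1 addr0.
Qed.
Lemma Pd2 W c : is22 W -> is21 c -> c ⊙ W = 0.
Proof.
move=> [W1 W2] [c1 c2].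
have h1 : A c W e = 0 by rewrite Acyc AE W2 c1 mul0l mul0r subrr.
by move: h1; rewrite Askew2 AE c2 W1 mul0r subr0 => /eqP; rewrite oppr_eq0 => /eqP.
Qed.
Lemma Pe1 b c : is21 b -> is12 c -> is22 (b ⊙ c).
Proof.
move=> [b1 b2] [c1 c2].
have h0 : A b e c = 0 by rewrite AE b2 c1 subrr.
have h1 : A e b c = 0 by rewrite Askew1 h0 oppr0.
split; first by rewrite mulA_A' b1 mul0l h1 subrr.
by rewrite mulA_A c2 mul0r add0r -Acyc h1.
Qed.
Lemma Pe2 b c : is21 b -> is12 c -> is11 (c ⊙ b).
Proof.
move=> [b1 b2] [c1 c2].
have h0 : A c e b = 0 by rewrite AE c2 b1 mul0l mul0r subrr.
have h1 : A e c b = 0 by rewrite Askew1 h0 oppr0.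
split; first by rewrite mulA_A' c1 h1 subr0.
by rewrite mulA_A b2 -Acyc h1 addr0.
Qed.
Lemma Pf1 a b : is12 a -> is12 b -> is21 (a ⊙ b).
Proof.
move=> [a1 a2] [b1 b2].
have h1 : A e a b = a ⊙ b by rewrite Askew1 AE a2 b1 mul0l sub0r opprK.
split; first by rewrite mulA_A' a1 h1 subrr.
by rewrite mulA_A b2 mul0r add0r -Acyc h1.
Qed.
Lemma Pf2 a b : is21 a -> is21 b -> is12 (a ⊙ b).
Proof.
move=> [a1 a2] [b1 b2].
have h1 : A e a b = - (a ⊙ b) by rewrite Askew1 AE a2 b1 mul0r subr0.
split; first by rewrite mulA_A' a1 mul0l h1 sub0r opprK.
by rewrite mulA_A b2 -Acyc h1 subrr.
Qed.

Definition f x := lie mul x e.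
Lemma fE x : f x = x ⊙ e - e ⊙ x. Proof. by []. Qed.
Lemma lieE x y : lie mul x y = x ⊙ y - y ⊙ x. Proof. by []. Qed.
Lemma lieDl x y z : lie mul (x + y) z = lie mul x z + lie mul y z.
Proof. by rewrite !lieE mulDl mulDr opprD addrACA. Qed.
Lemma lieDr x y z : lie mul z (x + y) = lie mul z x + lie mul z y.
Proof. by rewrite !lieE mulDl mulDr opprD addrACA. Qed.
Lemma lieNl x y : lie mul (- x) y = - lie mul x y.
Proof. by rewrite !lieE mulNl mulNr opprB opprK addrC. Qed.
Lemma lieNr x y : lie mul x (- y) = - lie mul x y.
Proof. by rewrite !lieE mulNl mulNr opprB opprK addrC. Qed.
Lemma lie0l x : lie mul 0 x = 0.
Proof. by rewrite lieE mul0l mul0r subrr. Qed.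
Lemma lie0r x : lie mul x 0 = 0.
Proof. by rewrite lieE mul0l mul0r subrr. Qed.
Lemma lieC x y : lie mul x y = - lie mul y x.
Proof. by rewrite !lieE opprB. Qed.
Lemma fD x y : f (x + y) = f x + f y. Proof. exact: lieDl. Qed.
Lemma fN x : f (- x) = - f x. Proof. exact: lieNl. Qed.
Lemma f0 : f 0 = 0. Proof. exact: lie0l. Qed.
Lemma fB x y : f (x - y) = f x - f y. Proof. by rewrite fD fN. Qed.

Lemma f3 x : f (f (f x)) = f x.
Proof.
have h1 : f (x ⊙ e) = x ⊙ e - (e ⊙ x) ⊙ e by rewrite fE RA FL.
have h2 : f (e ⊙ x) = (e ⊙ x) ⊙ e - e ⊙ x by rewrite fE LA.
have h3 : f ((e ⊙ x) ⊙ e) = 0 by rewrite fE RA -FL LA subrr.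
have h4 : f (f x) = (x ⊙ e - (e ⊙ x) ⊙ e) - ((e ⊙ x) ⊙ e - e ⊙ x).
  by rewrite (fE x) fB h1 h2.
rewrite h4 !fB h1 h2 h3.
by rewrite subr0 sub0r opprK addrA subrK.
Qed.
Lemma iter_f_cases k x : iter k.+1 f x = f x \/ iter k.+1 f x = f (f x).
Proof.
elim: k => [|k [IH|IH]]; first by left.
- by right; rewrite iterS IH.
- by left; rewrite iterS IH f3.
Qed.
Lemma iter_f_zero k x : iter k.+1 f x = 0 -> f x = 0.
Proof.
case: (iter_f_cases k x) => ->; first by [].
by move=> h; rewrite -f3 h f0.
Qed.
Lemma iter_f_fix0 k x : f x = 0 -> iter k.+1 f x = 0.
Proof. by move=> h; elim: k => [|k IH] //; rewrite iterS IH f0. Qed.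

Lemma is12_f x : is12 x -> f x = - x.
Proof. by move=> [h1 h2]; rewrite fE h1 h2 sub0r. Qed.
Lemma is21_f x : is21 x -> f x = x.
Proof. by move=> [h1 h2]; rewrite fE h1 h2 subr0. Qed.
Lemma is12N x : is12 x -> is12 (- x).
Proof. by move=> [h1 h2]; rewrite /is12 mulNl mulNr h1 h2 oppr0. Qed.
Lemma is21N x : is21 x -> is21 (- x).
Proof. by move=> [h1 h2]; rewrite /is21 mulNl mulNr h1 h2 oppr0. Qed.
Lemma is12D x y : is12 x -> is12 y -> is12 (x + y).
Proof. by move=> [h1 h2] [h3 h4]; rewrite /is12 mulDl mulDr h1 h2 h3 h4 addr0. Qed.
Lemma is21D x y : is21 x -> is21 y -> is21 (x + y).
Proof. by move=> [h1 h2] [h3 h4]; rewrite /is21 mulDl mulDr h1 h2 h3 h4 addr0. Qed.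
Lemma is12_iter k x : is12 x -> is12 (iter k f x).
Proof.
move=> h; elim: k => [|k IH] //=.
by rewrite (is12_f _ IH); apply: is12N.
Qed.
Lemma is12_iter2 k x : is12 x -> iter (k + k) f x = x.
Proof.
move=> h; elim: k => [|k IH] //.
rewrite addSn addnS !iterS IH (is12_f _ h) (is12_f _ (is12N _ h)) opprK.
by [].
Qed.
Lemma is21_iter k x : is21 x -> iter k f x = x.
Proof. by move=> h; elim: k => [|k IH] //=; rewrite IH is21_f. Qed.

Lemma decU U : f U = 0 -> is11 (e ⊙ U) /\ is22 (U - e ⊙ U).
Proof.
move=> /eqP; rewrite fE subr_eq0 => /eqP hU.
have h1 : (e ⊙ U) ⊙ e = e ⊙ U by rewrite -hU RA.
split; first by split; rewrite ?LA.
split; first by rewrite mulBr LA subrr.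
by rewrite mulBl h1 hU subrr.
Qed.

Lemma peirce12 x : peirce mul e P1 P2 x -> is12 x.
Proof.
case=> y ->; rewrite /= /is12; split.
  by rewrite mulBr LA -FL LA.
by rewrite mulBl RA subrr.
Qed.
Lemma peirce21 x : peirce mul e P2 P1 x -> is21 x.
Proof.
case=> y ->; rewrite /=; split.
  by rewrite -FL mulBr LA subrr mul0l.
by rewrite RA.
Qed.
Lemma peirce11 x : is11 x -> peirce mul e P1 P1 x.
Proof. by move=> [h1 h2]; exists x; rewrite /= h1 h2. Qed.
Lemma peirce22 x : is22 x -> peirce mul e P2 P2 x.
Proof. by move=> [h1 h2]; exists x; rewrite /= h1 !subr0 h2 subr0. Qed.
Lemma is11_f x : is11 x -> f x = 0.
Proof. by move=> [h1 h2]; rewrite fE h1 h2 subrr. Qed.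
Lemma is22_f x : is22 x -> f x = 0.
Proof. by move=> [h1 h2]; rewrite fE h1 h2 subrr. Qed.

Lemma splitU U : U = e ⊙ U + (U - e ⊙ U).
Proof. by rewrite subrKC. Qed.

Lemma comm12 U c : f U = 0 -> is12 c -> is12 (lie mul U c).
Proof.
move=> /decU [hV hW] hc.
rewrite (splitU U) lieDl !lieE (Pa2 _ _ hV hc) (Pb1 _ _ hW hc) subr0 add0r.
by apply: is12D; [apply: Pa1 | apply: is12N; apply: Pb2].
Qed.
Lemma comm21 U c : f U = 0 -> is21 c -> is21 (lie mul U c).
Proof.
move=> /decU [hV hW] hc.
rewrite (splitU U) lieDl !lieE (Pc1 _ _ hV hc) (Pd2 _ _ hW hc) subr0 add0r.
by apply: is21D; [apply: is21N; apply: Pc2 | apply: Pd1].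
Qed.
Lemma lie2112 b c : is21 b -> is12 c -> f (lie mul b c) = 0.
Proof.
move=> hb hc; rewrite lieE fB (is22_f _ (Pe1 _ _ hb hc)) (is11_f _ (Pe2 _ _ hb hc)).
by rewrite subrr.
Qed.
Lemma lie1221 b c : is12 b -> is21 c -> f (lie mul b c) = 0.
Proof.
move=> hb hc; rewrite lieC fN lie2112 ?oppr0 //.
Qed.
Lemma lie1212 a b : is12 a -> is12 b -> is21 (lie mul a b).
Proof. by move=> ha hb; rewrite lieE; apply: is21D; [apply: Pf1 | apply: is21N; apply: Pf1]. Qed.
Lemma lie2121 a b : is21 a -> is21 b -> is12 (lie mul a b).
Proof. by move=> ha hb; rewrite lieE; apply: is12D; [apply: Pf2 | apply: is12N; apply: Pf2]. Qed.
Lemma lieee : lie mul e e = 0.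
Proof. by rewrite lieE subrr. Qed.
Lemma lieNe12 b : is12 b -> lie mul (- e) b = f b.
Proof. by move=> [h1 h2]; rewrite lieNl !lieE fE h1 h2 sub0r subr0. Qed.
Lemma lieNe21 b : is21 b -> lie mul (- e) b = b.
Proof. by move=> [h1 h2]; rewrite lieNl lieE h1 h2 sub0r opprK. Qed.

Lemma pcomm_ext_le k (x y : nat -> R) :
  (forall j, (j <= k)%N -> x j = y j) -> pcomm mul k x = pcomm mul k y.
Proof.
elim: k => [|k IH] h /=; first by apply: h.
by rewrite IH ?h // => j hj; apply: h; apply: leqW.
Qed.

Lemma pcomm_upd_gt k w j z : (k < j)%N -> pcomm mul k (upd w j z) = pcomm mul k w.
Proof.
move=> hkj; apply: pcomm_ext_le => l hl; rewrite /upd.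
by case: eqP => // El; move: hl; rewrite El leqNgt hkj.
Qed.

Lemma pcomm_add k w j u v : (j <= k)%N ->
  pcomm mul k (upd w j (u + v)) = pcomm mul k (upd w j u) + pcomm mul k (upd w j v).
Proof.
elim: k => [|k IH] hj /=.
  by move: hj; rewrite leqn0 => /eqP ->; rewrite /upd eqxx.
rewrite leq_eqVlt in hj; case/orP: hj => [/eqP Ej | hj].
  rewrite Ej !pcomm_upd_gt ?ltnSn // /upd eqxx; exact: lieDr.
rewrite IH // lieDl /upd.
by have -> : (k.+1 == j) = false by apply/negbTE; rewrite neq_ltn hj orbT.
Qed.

Lemma pcomm_center k w j z : (j <= k)%N -> (0 < k)%N -> center mul z ->
  pcomm mul k (upd w j z) = 0.
Proof.
move=> hj hk hz; elim: k hj hk => [|k IH] hj hk //=.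
rewrite leq_eqVlt in hj; case/orP: hj => [/eqP Ej | hj].
  by rewrite Ej !pcomm_upd_gt ?ltnSn // /upd eqxx lieC hz oppr0.
case: k IH hj {hk} => [|k] IH hj.
  by move: hj; rewrite ltnS leqn0 => /eqP -> /=; rewrite /upd eqxx hz.
by rewrite IH // lie0l.
Qed.

Definition seqf (x y : R) : nat -> R :=
  fun j => if j == 0%N then x else if j == 1%N then y else e.

Lemma pcomm_seqf k x y : pcomm mul k.+1 (seqf x y) = iter k f (lie mul x y).
Proof. by elim: k => [|k IH] //; rewrite iterS -IH. Qed.

Lemma upd_seqf0 x y z : forall j, upd (seqf x y) 0 z j = seqf z y j.
Proof. by move=> j; rewrite /upd /seqf; case: (j == 0%N). Qed.
Lemma upd_seqf1 x y z : forall j, upd (seqf x y) 1 z j = seqf x z j.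
Proof.
move=> j; rewrite /upd /seqf; case: eqP => [->|] //.
Qed.

Lemma pcomm_ext k (x y : nat -> R) : (forall j, x j = y j) -> pcomm mul k x = pcomm mul k y.
Proof. by move=> h; apply: pcomm_ext_le => j _; apply: h. Qed.

Lemma iter_fD j x y : iter j f (x + y) = iter j f x + iter j f y.
Proof. by elim: j => [|j IH] //=; rewrite IH fD. Qed.
Lemma iter_f0 j : iter j f 0 = 0.
Proof. by elim: j => [|j IH] //=; rewrite IH f0. Qed.

Lemma cancelr0 (X Y : R) : X = X + Y -> Y = 0.
Proof. by move=> h; apply: (@addrI _ X); rewrite -h addr0. Qed.
Arguments cancelr0 {X Y}.
Arguments iter_f_zero {k x}.
Arguments peirce12 {x}.
Arguments peirce21 {x}.

Lemma lie2_3 (D : R -> R) : lie_n_derivation mul 2 D -> lie_n_derivation mul 3 D.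
Proof.
move=> H.
have HD2 : forall u v, D (lie mul u v) = lie mul (D u) v + lie mul u (D v).
  move=> u v; have := H (fun j => if j == 0%N then u else v).
  by rewrite /pn /= !big_ord_recl big_ord0 /= /upd /= addr0.
move=> x; rewrite /pn /= !big_ord_recl big_ord0 /= /upd /= addr0.
by rewrite /bump /= !addn0 (_ : (1 + 1 = 2)%N) // HD2 HD2 lieDl -addrA.
Qed.

Variables (D : R -> R) (m : nat).
Hypothesis HD : lie_n_derivation mul m D.
Hypothesis Hm : (3 <= m)%N.
Hypothesis Hi : forall a11 a22 : R, peirce mul e P1 P1 a11 -> peirce mul e P2 P2 a22 ->
     (forall x : R, peirce mul e P1 P2 x -> lie mul (a11 + a22) x = 0) ->
     center mul (a11 + a22).
Hypothesis Hii : forall a11 a22 : R, peirce mul e P1 P1 a11 -> peirce mul e P2 P2 a22 ->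
     (forall x : R, peirce mul e P2 P1 x -> lie mul (a11 + a22) x = 0) ->
     center mul (a11 + a22).

Definition Dl u v := D (u + v) - D u - D v.

Lemma Dl_eq u v : D (u + v) = D u + D v + Dl u v.
Proof. by rewrite /Dl -[D (u + v) - D u - D v]addrA -opprD subrKC. Qed.
Lemma DlC u v : Dl u v = Dl v u.
Proof. by rewrite /Dl [u + v]addrC addrAC. Qed.

Lemma star w j u v : (j < m)%N ->
  D (pn mul m (upd w j (u + v))) =
  D (pn mul m (upd w j u)) + D (pn mul m (upd w j v)) + pn mul m (upd w j (Dl u v)).
Proof.
move=> hj.
have hj' : (j <= m.-1)%N by rewrite -ltnS prednK // (leq_trans _ hj).
rewrite !HD.
have key : forall i : 'I_m,
  pn mul m (upd (upd w j (u + v)) i (D (upd w j (u + v) i))) =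
  pn mul m (upd (upd w j u) i (D (upd w j u i))) +
  pn mul m (upd (upd w j v) i (D (upd w j v i))) +
  (if (i : nat) == j then pn mul m (upd w j (Dl u v)) else 0).
  move=> i; case: eqP => [Eij | Nij].
  - have E z y : pn mul m (upd (upd w j z) i y) = pn mul m (upd w j y).
      by apply: pcomm_ext => l; rewrite /upd Eij; case: (l == j).
    rewrite !E /upd Eij eqxx -!pcomm_add // -Dl_eq.
    by [].
  - have E z : upd w j z i = w i by rewrite /upd; case: eqP.
    have E2 z : pn mul m (upd (upd w j z) i (D (w i))) = pn mul m (upd (upd w i (D (w i))) j z).
      apply: pcomm_ext => l; rewrite /upd; case: eqP => [->|] //.
      by case: eqP => // ->; move/eqP: Nij; rewrite eq_sym => /negbTE ->.
    by rewrite !E !E2 /pn pcomm_add // addr0.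
rewrite (eq_bigr _ (fun i _ => key i)) !big_split /=.
congr (_ + _).
rewrite -big_mkcond /=.
by rewrite (big_pred1 (Ordinal hj)).
Qed.

Definition F y := iter m.-2 f y.
Definition g y := iter m.-1 f y.

Lemma m1E : m.-1 = (m.-2).+1.
Proof. by case: m Hm => [|[|k]]. Qed.
Lemma m2E : m.-2 = ((m - 3)%N).+1.
Proof. by case: m Hm => [|[|[|k]]] // _; rewrite subSS subSS subSS subn0. Qed.

Lemma pn_seqf x y : pn mul m (seqf x y) = F (lie mul x y).
Proof. by rewrite /pn m1E pcomm_seqf. Qed.

Lemma FD x y : F (x + y) = F x + F y. Proof. exact: iter_fD. Qed.
Lemma F0 : F 0 = 0. Proof. exact: iter_f0. Qed.
Lemma Fe x : F (lie mul x e) = g x.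
Proof. by rewrite /g m1E iterSr. Qed.
Lemma Fzero x : F x = 0 -> f x = 0.
Proof. by rewrite /F m2E => /iter_f_zero. Qed.
Arguments Fzero {x}.
Lemma Ffix0 x : f x = 0 -> F x = 0.
Proof. by rewrite /F m2E => /iter_f_fix0. Qed.

Lemma pn_upd0 x y z : pn mul m (upd (seqf x y) 0 z) = F (lie mul z y).
Proof. by rewrite -pn_seqf; apply: pcomm_ext; exact: upd_seqf0. Qed.
Lemma pn_upd1 x y z : pn mul m (upd (seqf x y) 1 z) = F (lie mul x z).
Proof. by rewrite -pn_seqf; apply: pcomm_ext; exact: upd_seqf1. Qed.

Lemma star0 u v y :
  D (F (lie mul (u + v) y)) = D (F (lie mul u y)) + D (F (lie mul v y)) + F (lie mul (Dl u v) y).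
Proof. by have := star (seqf 0 y) 0 u v (leq_trans _ Hm); rewrite !pn_upd0; apply. Qed.
Lemma star1 x u v :
  D (F (lie mul x (u + v))) = D (F (lie mul x u)) + D (F (lie mul x v)) + F (lie mul x (Dl u v)).
Proof. by have := star (seqf x 0) 1 u v (leq_trans _ Hm); rewrite !pn_upd1; apply. Qed.

Lemma D0 : D 0 = 0.
Proof.
have := star0 0 0 0; rewrite !lie0r F0 addr0.
by move/cancelr0.
Qed.

Lemma L1 k b : lie mul k e = 0 -> is12 b \/ is21 b -> center mul (Dl k b).
Proof.
move=> hk hb; set U := Dl k b.
have fU : f U = 0.
  have := star0 k b e; rewrite lieDl hk add0r F0 D0 add0r.
  by move/cancelr0; rewrite Fe /g m1E => /iter_f_zero.
have [hV hW] := decU _ fU.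
have hUE : e ⊙ U + (U - e ⊙ U) = U by rewrite subrKC.
case: hb => hb.
- rewrite -hUE; apply: Hii; [exact: peirce11 | exact: peirce22 |].
  move=> x /peirce21 hx; rewrite hUE.
  have := star0 k b x; rewrite lieDl FD (Ffix0 _ (lie1221 _ _ hb hx)) addr0 D0 addr0.
  move/cancelr0/Fzero; rewrite (is21_f _ (comm21 _ _ fU hx)); by [].
- rewrite -hUE; apply: Hi; [exact: peirce11 | exact: peirce22 |].
  move=> x /peirce12 hx; rewrite hUE.
  have := star0 k b x; rewrite lieDl FD (Ffix0 _ (lie2112 _ _ hb hx)) addr0 D0 addr0.
  move/cancelr0/Fzero; rewrite (is12_f _ (comm12 _ _ fU hx)).
  by move/eqP; rewrite oppr_eq0 => /eqP.
Qed.

Lemma lieNee : lie mul (- e) e = 0.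
Proof. by rewrite lieNl lieee oppr0. Qed.

Lemma four u v : is12 u \/ is21 u -> is12 v \/ is21 v ->
  D (F (lie mul u e) + F (lie mul u v) + (F (lie mul (- e) e) + F (lie mul (- e) v))) =
  D (F (lie mul u e)) + D (F (lie mul u v)) + D (F (lie mul (- e) e)) + D (F (lie mul (- e) v)).
Proof.
move=> hu hv.
have E : F (lie mul (u + - e) (e + v)) =
   F (lie mul u e) + F (lie mul u v) + (F (lie mul (- e) e) + F (lie mul (- e) v)).
  rewrite lieDl (lieDr e v u) (lieDr e v (- e)).
  by rewrite (FD (lie mul u e + lie mul u v)) (FD (lie mul u e)) (FD (lie mul (- e) e)).
have c1 := L1 _ _ lieNee hu.
have c2 := L1 _ _ lieee hv.
rewrite -E star0 DlC (c1 (e + v)) F0 addr0.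
rewrite !star1 !(lieC _ (Dl e v)) !c2 oppr0 F0 !addr0.
by rewrite addrA.
Qed.

Lemma L2g x y : is12 x -> is21 y -> D (g x + y) = D (g x) + D y.
Proof.
move=> hx hy.
have := four _ _ (or_introl hx) (or_intror hy).
rewrite Fe lieNee F0 (Ffix0 _ (lie1221 _ _ hx hy)) D0 !addr0 add0r.
by rewrite (lieNe21 _ hy) /F (is21_iter _ _ hy).
Qed.

Lemma g_is12 x : is12 x -> is12 (g x).
Proof. exact: is12_iter. Qed.
Lemma gg x : is12 x -> g (g x) = x.
Proof. by move=> hx; rewrite /g -iterD is12_iter2. Qed.

Lemma L2 x y : is12 x -> is21 y -> D (x + y) = D x + D y.
Proof.
move=> hx hy; rewrite -(gg _ hx); apply: L2g => //; exact: g_is12.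
Qed.

Lemma main12 a b : is12 a -> is12 b -> D (a + b) = D a + D b.
Proof.
move=> ha hb.
suff H : forall a b, is12 a -> is12 b -> D (g a + g b) = D (g a) + D (g b).
  by rewrite -(gg _ ha) -(gg _ hb); apply: H; apply: g_is12.
move=> {ha hb a b} a b ha hb.
have := four _ _ (or_introl ha) (or_introl hb).
rewrite Fe lieNee F0 D0 addr0 add0r (lieNe12 _ hb) Fe.
have ht := lie1212 _ _ ha hb.
rewrite /F (is21_iter _ _ ht).
move=> H; rewrite (addrAC (g a)) L2 in H;
  [| exact: (is12D _ _ (g_is12 _ ha) (g_is12 _ hb)) | exact: ht].
rewrite (addrAC (D (g a))) in H; exact: addIr H.
Qed.

Lemma main21 a b : is21 a -> is21 b -> D (a + b) = D a + D b.
Proof.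
move=> ha hb.
have := four _ _ (or_intror ha) (or_intror hb).
rewrite lieNee F0 D0 addr0 add0r (lieNe21 _ hb).
have ht := is12_iter (m.-2) _ (lie2121 _ _ ha hb).
rewrite /F (is21_iter _ _ hb) -/(f a) (is21_f _ ha) (is21_iter _ _ ha).
move=> H; rewrite (addrAC a) (addrC (a + b)) L2 in H; [| exact: ht | exact: is21D].
rewrite (addrC (D a)) -addrA in H; exact: addrI H.
Qed.
End Alg.

Theorem lemma2p4 (R : zmodType) (mul : R -> R -> R) (e1 : R) (D : R -> R) :
  nonassoc_ring mul ->
  alternative mul ->
  nontrivial_idempotent mul e1 ->
  (* (i) *)
  (forall a11 a22 : R, peirce mul e1 P1 P1 a11 -> peirce mul e1 P2 P2 a22 ->
     (forall x : R, peirce mul e1 P1 P2 x -> lie mul (a11 + a22) x = 0) ->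
     center mul (a11 + a22)) ->
  (* (ii) *)
  (forall a11 a22 : R, peirce mul e1 P1 P1 a11 -> peirce mul e1 P2 P2 a22 ->
     (forall x : R, peirce mul e1 P2 P1 x -> lie mul (a11 + a22) x = 0) ->
     center mul (a11 + a22)) ->
  lie_type_derivation mul D ->
  forall (i j : pidx) (a b : R), i <> j ->
    peirce mul e1 i j a -> peirce mul e1 i j b ->
    D (a + b) = D a + D b.
Proof.
move=> Hr Ha [_ [He _]] Hi Hii [n [Hn HD]].
have [m [Hm HDm]] : exists m, (2 < m)%N /\ lie_n_derivation mul m D.
  move: Hn; rewrite leq_eqVlt => /orP [/eqP En | Hn].
    by exists 3%N; split => //; apply: lie2_3 => //; rewrite En.
  by exists n.
move=> i j a b; case: i; case: j => // _ ha hb.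
- exact: (main12 _ _ _ Hr Ha He _ _ HDm Hm Hi Hii _ _ (peirce12 _ _ _ Hr Ha He _ ha) (peirce12 _ _ _ Hr Ha He _ hb)).
- exact: (main21 _ _ _ Hr Ha He _ _ HDm Hm Hi Hii _ _ (peirce21 _ _ _ Hr Ha He _ ha) (peirce21 _ _ _ Hr Ha He _ hb)).
Qed.
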